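(* Let $\Omega_H$ be the infinite hexagonal lattice graph (the infinite 3-regular honeycomb lattice, whose faces are hexagons). Then $\chi_{td}(\Omega_H) = 7$.
   Context: For a (possibly infinite) simple graph $G$ and a positive integer $k$, a proper $k$-total difference labeling of $G$ is a function $f: V(G)\to\{1,\dots,k\}$, extended to edges by $f(\{u,v\}) = |f(u)-f(v)|$, such that: (i) adjacent vertices receive different labels; (ii) two distinct edges sharing a vertex receive different labels; (iii) no edge receives the same label as either of its endpoints. $\chi_{td}(G)$ denotes the smallest $k$ for which $G$ has a proper $k$-total difference labeling. *)

(* Defs.v *)
From Stdlib Require Import ZArith Lia.
Open Scope Z_scope.

Record graph := Graph {
  gV : Type;
  gadj : gV -> gV -> Prop;
  gadj_sym : forall u v, gadj u v -> gadj v u;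
  gadj_irrefl : forall v, ~ gadj v v
}.

Definition edge_label {V : Type} (f : V -> Z) (u v : V) : Z := Z.abs (f u - f v).

Definition proper_td_labeling (G : graph) (k : Z) (f : gV G -> Z) : Prop :=
  (forall v, 1 <= f v <= k) /\
  (forall u v, gadj G u v -> f u <> f v) /\
  (forall u v w, gadj G u v -> gadj G u w -> v <> w ->
       edge_label f u v <> edge_label f u w) /\
  (forall u v, gadj G u v -> edge_label f u v <> f u /\ edge_label f u v <> f v).

Definition has_td_labeling (G : graph) (k : Z) : Prop :=
  exists f, proper_td_labeling G k f.

Definition chi_td_eq (G : graph) (k : Z) : Prop :=
  1 <= k /\ has_td_labeling G k /\
  forall k', 1 <= k' -> has_td_labeling G k' -> k <= k'.

(* The infinite hexagonal (honeycomb) lattice in its "brick wall" embedding: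
   vertices Z x Z, horizontal edges (x,y)-(x+1,y) always, vertical edges
   (x,y)-(x,y+1) exactly when x+y is even. Every vertex has degree 3 and
   all faces are hexagons. *)
Definition hex_adj (p q : Z * Z) : Prop :=
  let (x1, y1) := p in let (x2, y2) := q in
  (y1 = y2 /\ Z.abs (x1 - x2) = 1) \/
  (x1 = x2 /\ Z.abs (y1 - y2) = 1 /\ Z.even (x1 + Z.min y1 y2) = true).

Lemma hex_adj_sym : forall p q, hex_adj p q -> hex_adj q p.
Proof.
  intros [x1 y1] [x2 y2]; unfold hex_adj; intros [[H1 H2]|[H1 [H2 H3]]].
  - left; split; [congruence|]. rewrite <- H2; rewrite <- Z.abs_opp; f_equal; ring.
  - right; split; [congruence|]. split; [rewrite <- H2; rewrite <- Z.abs_opp; f_equal; ring|].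
    subst x2; rewrite Z.min_comm; exact H3.
Qed.

Lemma hex_adj_irrefl : forall p, ~ hex_adj p p.
Proof.
  intros [x y]; unfold hex_adj; intros [[_ H]|[_ [H _]]];
  rewrite Z.sub_diag in H; discriminate.
Qed.

Definition Omega_H : graph := Graph (Z * Z) hex_adj hex_adj_sym hex_adj_irrefl.

(* Main.v *)
Require Import Defs.
From Stdlib Require Import ZArith Lia.
Open Scope Z_scope.
Ltac zl := Z.to_euclidean_division_equations; lia.

Definition loc (c a b d : Z) : Prop :=
  c <> a /\ c <> b /\ c <> d /\
  Z.abs (c - a) <> c /\ Z.abs (c - a) <> a /\
  Z.abs (c - b) <> c /\ Z.abs (c - b) <> b /\
  Z.abs (c - d) <> c /\ Z.abs (c - d) <> d /\
  Z.abs (c - a) <> Z.abs (c - b) /\ Z.abs (c - a) <> Z.abs (c - d) /\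
  Z.abs (c - b) <> Z.abs (c - d).

Definition n3 (p : Z * Z) : Z * Z :=
  (fst p, if (fst p + snd p) mod 2 =? 0 then snd p + 1 else snd p - 1).

Lemma adj_nb x y q : hex_adj (x, y) q <->
  q = (x + 1, y) \/ q = (x - 1, y) \/ q = n3 (x, y).
Proof.
  destruct q as [x2 y2]; unfold hex_adj, n3; simpl; rewrite Zeven_mod.
  split.
  - intros [[H1 H2]|[H1 [H2 H3]]].
    + subst y2. destruct (Z.abs_spec (x - x2)) as [[? ?]|[? ?]].
      * right; left; f_equal; lia.
      * left; f_equal; lia.
    + subst x2. apply Z.eqb_eq in H3. right; right.
      destruct (Z.abs_spec (y - y2)) as [[? ?]|[? ?]].
      * rewrite Z.min_r in H3 by lia.
        assert (y2 = y - 1) by lia. subst y2. clear H2 H H0.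
        destruct (Z.eqb_spec ((x + y) mod 2) 0); [exfalso; zl|]. reflexivity.
      * rewrite Z.min_l in H3 by lia.
        assert (y2 = y + 1) by lia. subst y2. clear H2 H H0.
        destruct (Z.eqb_spec ((x + y) mod 2) 0); [|exfalso; zl]. reflexivity.
  - intros [H|[H|H]]; injection H; intros; subst.
    + left; split; [auto|]. replace (x - (x+1)) with (-1) by ring. reflexivity.
    + left; split; [auto|]. replace (x - (x-1)) with 1 by ring. reflexivity.
    + right. destruct (Z.eqb_spec ((x + y) mod 2) 0) as [E|E].
      * split; [auto|]. split; [replace (y - (y+1)) with (-1) by ring; reflexivity|].
        rewrite Z.min_l by lia. apply Z.eqb_eq; auto.
      * split; [auto|]. split; [replace (y - (y-1)) with 1 by ring; reflexivity|].
        rewrite Z.min_r by lia. apply Z.eqb_eq. zl.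
Qed.

Lemma nb_distinct x y :
  (x + 1, y) <> (x - 1, y) /\ (x + 1, y) <> n3 (x, y) /\ (x - 1, y) <> n3 (x, y).
Proof.
  unfold n3; simpl; repeat split; intro H; injection H; intros; lia.
Qed.

Definition g (i j : Z) : Z :=
  if j =? 0 then
    (if i =? 0 then 1 else if i =? 1 then 3 else if i =? 2 then 2 else 7)
  else
    (if i =? 0 then 5 else if i =? 1 then 7 else if i =? 2 then 6 else 4).

Definition f7 (p : Z * Z) : Z := g (fst p mod 4) (snd p mod 2).

Lemma f7_loc x y :
  loc (f7 (x, y)) (f7 (x + 1, y)) (f7 (x - 1, y)) (f7 (n3 (x, y))).
Proof.
  unfold f7, n3; simpl.
  assert (H1 : (x + 1) mod 4 = (x mod 4 + 1) mod 4) by zl.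
  assert (H2 : (x - 1) mod 4 = (x mod 4 + 3) mod 4) by zl.
  assert (H3 : (x + y) mod 2 = (x mod 4 + y mod 2) mod 2) by zl.
  assert (H4 : forall b : bool, (if b then y + 1 else y - 1) mod 2 = (y mod 2 + 1) mod 2)
    by (destruct b; zl).
  rewrite H4, H1, H2.
  assert (Hi : x mod 4 = 0 \/ x mod 4 = 1 \/ x mod 4 = 2 \/ x mod 4 = 3) by zl.
  assert (Hj : y mod 2 = 0 \/ y mod 2 = 1) by zl.
  destruct Hi as [Hi|[Hi|[Hi|Hi]]]; destruct Hj as [Hj|Hj]; rewrite Hi, Hj;
    vm_compute; repeat split; discriminate.
Qed.

Lemma f7_range p : 1 <= f7 p <= 7.
Proof.
  unfold f7, g. repeat match goal with |- context [if ?b then _ else _] => destruct b end; lia.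
Qed.

Lemma loc_labeling (k : Z) (f : Z * Z -> Z) :
  (forall p, 1 <= f p <= k) ->
  (forall x y, loc (f (x, y)) (f (x + 1, y)) (f (x - 1, y)) (f (n3 (x, y)))) ->
  proper_td_labeling Omega_H k f.
Proof.
  intros Hr Hl. unfold proper_td_labeling, edge_label; simpl.
  split; [exact Hr|].
  split; [|split].
  - intros [x y] v Hv. apply adj_nb in Hv. specialize (Hl x y). unfold loc in Hl.
    destruct Hv as [ -> | [ -> | -> ] ]; tauto.
  - intros [x y] v w Hv Hw Hvw. apply adj_nb in Hv. apply adj_nb in Hw.
    specialize (Hl x y). unfold loc in Hl.
    destruct Hv as [ -> | [ -> | -> ] ]; destruct Hw as [ -> | [ -> | -> ] ];
      try (exfalso; apply Hvw; reflexivity); try tauto;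
      intro E; symmetry in E; tauto.
  - intros [x y] v Hv. apply adj_nb in Hv. specialize (Hl x y). unfold loc in Hl.
    destruct Hv as [ -> | [ -> | -> ] ]; tauto.
Qed.

Lemma range6 z : 1 <= z <= 6 -> z = 1 \/ z = 2 \/ z = 3 \/ z = 4 \/ z = 5 \/ z = 6.
Proof. lia. Qed.

Definition chain (c a b d : Z) : Prop :=
  c <> 3 /\
  (c = 2 -> a = 3 \/ b = 3 \/ d = 3) /\
  (c = 5 -> a = 2 \/ b = 2 \/ d = 2 \/ a = 3 \/ b = 3 \/ d = 3) /\
  (c = 1 -> a = 3 \/ b = 3 \/ d = 3 \/ a = 5 \/ b = 5 \/ d = 5) /\
  (c = 4 -> a = 1 \/ b = 1 \/ d = 1 \/ a = 3 \/ b = 3 \/ d = 3) /\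
  (c = 6 -> a = 1 \/ b = 1 \/ d = 1 \/ a = 2 \/ b = 2 \/ d = 2 \/ a = 5 \/ b = 5 \/ d = 5).

Lemma loc_chain c a b d :
  1 <= c <= 6 -> 1 <= a <= 6 -> 1 <= b <= 6 -> 1 <= d <= 6 ->
  loc c a b d -> chain c a b d.
Proof.
  intros Hc Ha Hb Hd.
  apply range6 in Hc, Ha, Hb, Hd.
  destruct Hc as [->|[->|[->|[ -> | [ -> | -> ] ]]]];
  destruct Ha as [->|[->|[->|[ -> | [ -> | -> ] ]]]];
  destruct Hb as [->|[->|[->|[ -> | [ -> | -> ] ]]]];
  destruct Hd as [->|[->|[->|[ -> | [ -> | -> ] ]]]];
  unfold loc, chain; simpl; lia.
Qed.

Lemma labeling_loc k f : proper_td_labeling Omega_H k f ->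
  forall x y, loc (f (x, y)) (f (x + 1, y)) (f (x - 1, y)) (f (n3 (x, y))).
Proof.
  intros [_ [Hi [Hii Hiii]]] x y. simpl in *. unfold edge_label in *.
  assert (A1 : hex_adj (x, y) (x + 1, y)) by (apply adj_nb; auto).
  assert (A2 : hex_adj (x, y) (x - 1, y)) by (apply adj_nb; auto).
  assert (A3 : hex_adj (x, y) (n3 (x, y))) by (apply adj_nb; auto).
  destruct (nb_distinct x y) as [D1 [D2 D3]].
  pose proof (Hi _ _ A1). pose proof (Hi _ _ A2). pose proof (Hi _ _ A3).
  pose proof (Hiii _ _ A1). pose proof (Hiii _ _ A2). pose proof (Hiii _ _ A3).
  pose proof (Hii _ _ _ A1 A2 D1). pose proof (Hii _ _ _ A1 A3 D2).
  pose proof (Hii _ _ _ A2 A3 D3).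
  unfold loc; tauto.
Qed.

Lemma no6 f : proper_td_labeling Omega_H 6 f -> False.
Proof.
  intros Hf.
  assert (Hr : forall p, 1 <= f p <= 6) by apply Hf.
  assert (C : forall x y, chain (f (x, y)) (f (x + 1, y)) (f (x - 1, y)) (f (n3 (x, y)))).
  { intros x y. apply loc_chain; try apply Hr. eapply labeling_loc; eauto. }
  assert (N3 : forall p, f p <> 3) by (intros [x y]; apply (C x y)).
  assert (N2 : forall p, f p <> 2).
  { intros [x y] E. destruct (C x y) as [_ [H _]].
    destruct (H E) as [G|[G|G]]; exact (N3 _ G). }
  assert (N5 : forall p, f p <> 5).
  { intros [x y] E. destruct (C x y) as [_ [_ [H _]]].
    destruct (H E) as [G|[G|[G|[G|[G|G]]]]]; solve [exact (N3 _ G) | exact (N2 _ G)]. }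
  assert (N1 : forall p, f p <> 1).
  { intros [x y] E. destruct (C x y) as [_ [_ [_ [H _]]]].
    destruct (H E) as [G|[G|[G|[G|[G|G]]]]]; solve [exact (N3 _ G) | exact (N5 _ G)]. }
  assert (N4 : forall p, f p <> 4).
  { intros [x y] E. destruct (C x y) as [_ [_ [_ [_ [H _]]]]].
    destruct (H E) as [G|[G|[G|[G|[G|G]]]]]; solve [exact (N3 _ G) | exact (N1 _ G)]. }
  assert (N6 : forall p, f p <> 6).
  { intros [x y] E. destruct (C x y) as [_ [_ [_ [_ [_ H]]]]].
    destruct (H E) as [G|[G|[G|[G|[G|[G|[G|[G|G]]]]]]]];
      exact (N1 _ G) || exact (N2 _ G) || exact (N5 _ G). }
  pose proof (Hr (0, 0)) as R.
  pose proof (N1 (0,0)). pose proof (N2 (0,0)). pose proof (N3 (0,0)).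
  pose proof (N4 (0,0)). pose proof (N5 (0,0)). pose proof (N6 (0,0)). lia.
Qed.

Theorem mainTheorem3 : chi_td_eq Omega_H 7%Z.
Proof.
  split; [lia|]. split.
  - exists f7. apply loc_labeling; [apply f7_range | apply f7_loc].
  - intros k' Hk' [f Hf]. destruct (Z_le_gt_dec 7 k') as [?|Hlt]; [auto|].
    exfalso. apply (no6 f). destruct Hf as [Hr Hrest]. split; [|exact Hrest].
    intros p; specialize (Hr p); lia.
Qed.
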